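(* Let $P$ be a finite point set in the plane in general position and let $W$ be a finite point set with $P\cup W$ in general position. If no edge of the Delaunay triangulation $\mathrm{DT}(P)$ is an edge of $\mathrm{DG}^-(P,W)$, then $\mathrm{DG}^-(P,W)$ has no edges.
   Context: Let $P$ (the vertices) and $W$ (the witnesses) be finite point sets in $\mathbb{R}^2$; $P$ and $W$ may share points. The witness Delaunay graph $\mathrm{DG}^-(P,W)$ is the graph with vertex set $P$ in which distinct $x,y\in P$ are adjacent if and only if there is an open disk containing no point of $W$ whose bounding circle passes through $x$ and $y$. General position means that no three distinct points are collinear and no four distinct points are concyclic. For a finite point set $Q$ in general position, $\mathrm{DT}(Q)$ is its Delaunay triangulation: distinct $a,b\in Q$ are joined iff some open disk whose boundary passes through $a$ and $b$ contains no point of $Q$. *)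

(* Defs.v *)
(* points of the plane over an arbitrary real closed field R
   (the Euclidean plane is the case R = real numbers). *)
From HB Require Import structures.
From mathcomp Require Import all_boot all_order all_algebra.
Set Implicit Arguments. Unset Strict Implicit. Unset Printing Implicit Defensive.
Import Order.TTheory GRing.Theory Num.Theory.
Local Open Scope ring_scope.

Section Geom.
Variable R : rcfType.

Definition point := (R * R)%type.

Definition dist2 (p q : point) : R := (p.1 - q.1) ^+ 2 + (p.2 - q.2) ^+ 2.

Definition collinear (a b c : point) : Prop :=
  (b.1 - a.1) * (c.2 - a.2) - (b.2 - a.2) * (c.1 - a.1) = 0.

Definition concyclic (a b c d : point) : Prop :=
  exists o : point, [/\ dist2 b o = dist2 a o, dist2 c o = dist2 a o
                      & dist2 d o = dist2 a o].

Definition general_position (Q : seq point) : Prop :=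
  (forall a b c, a \in Q -> b \in Q -> c \in Q ->
     a != b -> a != c -> b != c -> ~ collinear a b c) /\
  (forall a b c d, a \in Q -> b \in Q -> c \in Q -> d \in Q ->
     uniq [:: a; b; c; d] -> ~ concyclic a b c d).

(* There is an open disk (center o, radius |x - o| = |y - o|) whose bounding
   circle passes through x and y and which contains no point of W. *)
Definition empty_disk_through (W : seq point) (x y : point) : Prop :=
  exists o : point, dist2 x o = dist2 y o /\
    forall w, w \in W -> ~ (dist2 w o < dist2 x o).

Definition wdg_edge (P W : seq point) (x y : point) : Prop :=
  [/\ x \in P, y \in P, x != y & empty_disk_through W x y].

Definition dt_edge (Q : seq point) (a b : point) : Prop :=
  [/\ a \in Q, b \in Q, a != b & empty_disk_through Q a b].

End Geom.

(* Main.v *)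
Require Import Defs.
From HB Require Import structures.
From mathcomp Require Import all_boot all_order all_algebra.
Set Implicit Arguments. Unset Strict Implicit.
Import Order.TTheory GRing.Theory Num.Theory.
Local Open Scope ring_scope.

Section Aux.
Variable R : rcfType.

Lemma key (u1 u2 v1 v2 t : R) : (u1 - t*v1)^+2 + (u2 - t*v2)^+2 =
  (u1^+2 + u2^+2) - (t*(u1*v1+u2*v2))*+2 + t^+2*(v1^+2+v2^+2).
Proof.
rewrite !sqrrB !exprMn mulrDr mulrnDl opprD mulrDr (mulrCA u1) (mulrCA u2).
set a := u1^+2; set b := u2^+2; set c := (t * (u1*v1))*+2; set d := (t*(u2*v2))*+2.
set e := t^+2 * v1^+2; set f := t^+2*v2^+2.
rewrite -!addrA; congr (_ + _).
rewrite !opprD -!addrA.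
rewrite (addrCA e b) !(addrCA _ b); congr (_ + _).
by rewrite !(addrCA e).
Qed.

Definition gg (x o p : point R) : R := (p.1-x.1)*(o.1-x.1) + (p.2-x.2)*(o.2-x.2).
Definition cpt (x o : point R) (t : R) : point R :=
  (x.1 + t*(o.1-x.1), x.2 + t*(o.2-x.2)).

Lemma dist_c x o p t : dist2 p (cpt x o t) =
  dist2 p x - (t * gg x o p)*+2 + t^+2 * dist2 o x.
Proof.
have E (a b c : R) : a - (b + c) = a - b - c.
  by rewrite opprD addrA.
by rewrite /dist2 /cpt /gg /= -key !E.
Qed.

Lemma cpt1 x o : cpt x o 1 = o.
Proof. by case: o => o1 o2; rewrite /cpt /= !mul1r !(addrC x.1) !(addrC x.2) !subrK. Qed.

Lemma dist_o x o p : dist2 p o = dist2 p x - (gg x o p)*+2 + dist2 o x.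
Proof. by rewrite -{1}(cpt1 x o) dist_c mul1r expr1n mul1r. Qed.

Lemma dist_x x o t : dist2 x (cpt x o t) = t^+2 * dist2 o x.
Proof. by rewrite dist_c /gg /dist2 !subrr !expr0n /= !mul0r !addr0 mulr0 mul0rn subr0 add0r. Qed.

Lemma gg_x x o : gg x o x = 0.
Proof. by rewrite /gg !subrr !mul0r addr0. Qed.

Lemma dist2_ge0 (p q : point R) : 0 <= dist2 p q.
Proof. by rewrite /dist2 addr_ge0 // sqr_ge0. Qed.

Lemma dist2C (p q : point R) : dist2 p q = dist2 q p.
Proof. by rewrite /dist2 -(opprB p.1) -(opprB p.2) !sqrrN. Qed.

Lemma dist2_gt0 (p q : point R) : p != q -> 0 < dist2 p q.
Proof.
move=> npq; rewrite lt_def dist2_ge0 andbT; apply: contra npq.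
rewrite /dist2 paddr_eq0 ?sqr_ge0 // !sqrf_eq0 !subr_eq0 => /andP[/eqP h1 /eqP h2].
by case: p q h1 h2 => [p1 p2] [q1 q2] /= -> ->.
Qed.

Lemma min_ex (T : eqType) (f : T -> R) (s : seq T) y : y \in s ->
  exists2 q, q \in s & forall p, p \in s -> f q <= f p.
Proof.
elim: s y => [//|a s IH] y _.
case: s IH => [|b s] IH.
  by exists a; rewrite ?mem_head // => p; rewrite inE => /eqP ->.
have [q qs qm] := IH _ (mem_head _ _).
have [aq|qa] := leP (f a) (f q).
  exists a; first exact: mem_head.
  move=> p; rewrite inE => /orP[/eqP->//|/qm]; exact: le_trans.
exists q; first by rewrite inE qs orbT.
by move=> p; rewrite inE => /orP[/eqP->|/qm//]; apply: ltW.
Qed.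

Lemma pos_part (d gp t : R) : 0 <= t -> 0 <= d ->
  (0 < gp -> t <= d / (gp *+ 2)) -> 0 <= d - (t * gp) *+ 2.
Proof.
move=> t0 d0 h; rewrite subr_ge0.
have [gp0|] := ltP 0 gp.
  have g2 : 0 < gp *+ 2 by rewrite pmulrn_rgt0.
  by rewrite -mulrnAr -ler_pdivlMr // h.
move=> gp0; apply: le_trans d0.
have h0 : t * gp <= 0 := mulr_ge0_le0 t0 gp0.
by rewrite mulr2n -[0]addr0 lerD.
Qed.

End Aux.

Theorem mainTheorem13 (R : rcfType) (P W : seq (point R)) :
  general_position P ->
  general_position (P ++ W) ->
  (forall x y, dt_edge P x y -> ~ wdg_edge P W x y) ->
  forall x y, ~ wdg_edge P W x y.
Proof.
move=> _ _ H x y [xP yP xy [o [Hxy Hw]]].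
set f := fun p => dist2 p x / (gg x o p *+ 2).
have Hy : dist2 y x = gg x o y *+ 2.
  have := dist_o x o y; rewrite -Hxy dist2C.
  move/(congr1 (fun z => z - dist2 o x)); rewrite subrr addrK => /esym /eqP.
  by rewrite subr_eq0 => /eqP.
have gy : 0 < gg x o y.
  by rewrite -(pmulrn_lgt0 _ (isT : (0 < 2)%N)) -Hy dist2_gt0 // eq_sym.
have yL : y \in [seq p <- P | 0 < gg x o p] by rewrite mem_filter gy yP.
have [q] := min_ex f yL; rewrite mem_filter => /andP[gq qP] qm.
set t := f q.
have g2 : 0 < gg x o q *+ 2 by rewrite pmulrn_rgt0.
have t0 : 0 <= t by rewrite /t /f divr_ge0 ?dist2_ge0 // ltW.
have fy : f y = 1 by rewrite /f Hy divff // gt_eqF // pmulrn_rgt0.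
have t1 : t <= 1 by rewrite -fy qm // mem_filter gy yP.
have xq : x != q by apply: contraTneq gq => <-; rewrite gg_x ltxx.
have Hq : (t * gg x o q) *+ 2 = dist2 q x.
  by rewrite -mulrnAr /t /f divfK // gt_eqF.
have eqd : dist2 x (cpt x o t) = dist2 q (cpt x o t).
  by rewrite dist_x dist_c Hq subrr add0r.
have gen : forall p, (0 < gg x o p -> t <= f p) ->
    ~ (dist2 p (cpt x o t) < dist2 x (cpt x o t)).
  move=> p hp; rewrite dist_c dist_x ltNge lerDr.
  by rewrite pos_part // dist2_ge0.
apply: (H x q); split => //; exists (cpt x o t); split => //.
- move=> p pP; apply: gen => gp; apply: qm; by rewrite mem_filter gp pP.
- move=> w wW; apply: gen => gw; apply: le_trans t1 _.
  have g2w : 0 < gg x o w *+ 2 by rewrite pmulrn_rgt0.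
  rewrite /f ler_pdivlMr // mul1r -subr_ge0.
  have := Hw w wW; rewrite (dist_o x o w) (dist2C x o).
  by move/negP; rewrite -leNgt lerDr.
Qed.
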